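(* Given an arbitrary collection of weight vectors $\{X^i(\theta^i)\}_{i\in[n],\theta^i\in\Theta^i}$, with $X^i(\theta^i)=(X^i_{\omega,j}(\theta^i))_{\omega\in\Omega,j\in[m]}\in\mathbb{R}^{m|\Omega|}$, one can compute an exact optimal solution of $$\max_{\hat\Pi\in\mathcal{P}(F)}\ \sum_{i\in[n]}\sum_{\theta^i\in\Theta^i}\hat\Pi^i(\theta^i)\cdot X^i(\theta^i)$$ in time $O\!\left(m|\Omega|\sum_{i\in[n]}|\Theta^i|+\big(\sum_{i\in[n]}|\Theta^i|\big)^2\right)$ (counting arithmetic operations).
   Context: Multi-buyer setting: $n$ buyers, finite state set $\Omega$, action set $A=\{a_1,\dots,a_m\}$. Buyer $i$ has a finite type space $\Theta^i\subseteq\Delta(\Omega)$ and type distribution $F^i$ with $F^i(\theta^i)>0$; types are independent, $\Theta=\prod_i\Theta^i$, $F(\theta)=\prod_iF^i(\theta^i)$, $F^{-i}(\theta^{-i})=\prod_{\ell\ne i}F^\ell(\theta^\ell)$. A (feasible) ex-post signaling scheme specifies, for every $\theta\in\Theta$, numbers $\pi^i_{\omega,j}(\theta)\ge0$ and $p^i(\theta)$ with $\sum_{j}\pi^i_{\omega,j}(\theta)=p^i(\theta)$ for all $i,\omega$ and $\sum_ip^i(\theta)\le1$. Its reduced form is $\hat\Pi^i(\theta^i)=(\hat\pi^i_{\omega,j}(\theta^i))_{\omega,j}$ with $\hat\pi^i_{\omega,j}(\theta^i)=\sum_{\theta^{-i}}F^{-i}(\theta^{-i})\pi^i_{\omega,j}(\theta^i,\theta^{-i})$.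 $\mathcal{P}(F)$ is the set of reduced forms of all feasible ex-post signaling schemes; $\cdot$ is the standard inner product on $\mathbb{R}^{m|\Omega|}$. *)

(* Defs.v *)
From mathcomp Require Import all_boot all_order all_algebra.
From mathcomp Require Import reals.
Set Implicit Arguments. Unset Strict Implicit. Unset Printing Implicit Defensive.
Import Order.TTheory GRing.Theory Num.Theory.
Local Open Scope ring_scope.

(* A program works on a growing list of real registers.  Initially the
   registers hold [:: 0; 1] ++ (encoded input). *)
Inductive aop := AAdd | ASub | AMul | ADiv.

Inductive act_tree :=
  | Leaf   of seq nat
  | Arith  of aop & nat & nat & act_tree
  | Branch of nat & nat & act_tree & act_tree.

Definition aop_eval {R : realFieldType} (o : aop) (x y : R) : R :=
  match o with AAdd => x + y | ASub => x - y | AMul => x * y | ADiv => x / y end.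

Fixpoint act_run {R : realFieldType} (t : act_tree) (regs : seq R) : seq R :=
  match t with
  | Leaf out => [seq nth 0 regs q | q <- out]
  | Arith o a b t' => act_run t' (rcons regs (aop_eval o (nth 0 regs a) (nth 0 regs b)))
  | Branch a b t1 t2 =>
      if nth 0 regs a < nth 0 regs b then act_run t1 regs else act_run t2 regs
  end.

Fixpoint act_cost {R : realFieldType} (t : act_tree) (regs : seq R) : nat :=
  match t with
  | Leaf _ => 0%N
  | Arith o a b t' =>
      (act_cost t' (rcons regs (aop_eval o (nth 0 regs a) (nth 0 regs b)))).+1
  | Branch a b t1 t2 =>
      (if nth 0 regs a < nth 0 regs b then act_cost t1 regs else act_cost t2 regs).+1
  end.

(* n buyers ('I_n), m actions ('I_m), k states ('I_k); buyer i has t i types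
   ('I_(t i)).  A type profile is an element of [profile t]. *)
Notation profile t := {dffun forall i : 'I__, 'I_(t i)}.

(* weight vectors X^i(θ^i) and reduced forms Π̂^i(θ^i) have this shape *)
Definition rf_type (R : Type) (n m k : nat) (t : 'I_n -> nat) :=
  forall i : 'I_n, 'I_(t i) -> 'I_k -> 'I_m -> R.
Arguments rf_type : clear implicits.

Definition feasible_expost {R : realFieldType} (n m k : nat) (t : 'I_n -> nat)
  (pi : profile t -> 'I_n -> 'I_k -> 'I_m -> R) (p : profile t -> 'I_n -> R) :=
  [/\ forall th i w j, 0 <= pi th i w j,
      forall th i w, \sum_(j < m) pi th i w j = p th i
    & forall th, \sum_(i < n) p th i <= 1].

Definition reduced_form {R : realFieldType} (n m k : nat) (t : 'I_n -> nat)
  (F : forall i : 'I_n, 'I_(t i) -> R)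
  (pi : profile t -> 'I_n -> 'I_k -> 'I_m -> R) : rf_type R n m k t :=
  fun i thi w j =>
    \sum_(th : profile t | th i == thi)
      (\prod_(l < n | l != i) F l (th l)) * pi th i w j.

Definition in_PF {R : realFieldType} (n m k : nat) (t : 'I_n -> nat)
  (F : forall i : 'I_n, 'I_(t i) -> R) (rf : rf_type R n m k t) : Prop :=
  exists (pi : profile t -> 'I_n -> 'I_k -> 'I_m -> R) (p : profile t -> 'I_n -> R),
    feasible_expost pi p /\ rf = reduced_form F pi.

Definition rf_objective {R : realFieldType} (n m k : nat) (t : 'I_n -> nat)
  (rf X : rf_type R n m k t) : R :=
  \sum_(i < n) \sum_(thi < t i) \sum_(w < k) \sum_(j < m) rf i thi w j * X i thi w j.

Definition enc_dist {R : Type} (n : nat) (t : 'I_n -> nat)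
  (F : forall i : 'I_n, 'I_(t i) -> R) : seq R :=
  flatten [seq [seq F i th | th <- enum 'I_(t i)] | i <- enum 'I_n].

Definition enc_rf {R : Type} (n m k : nat) (t : 'I_n -> nat)
  (rf : rf_type R n m k t) : seq R :=
  flatten [seq flatten [seq flatten [seq [seq rf i th w j | j <- enum 'I_m]
                                    | w <- enum 'I_k]
                       | th <- enum 'I_(t i)]
          | i <- enum 'I_n].

Definition act_input {R : realFieldType} (n m k : nat) (t : 'I_n -> nat)
  (F : forall i : 'I_n, 'I_(t i) -> R) (X : rf_type R n m k t) : seq R :=
  [:: 0; 1] ++ enc_dist F ++ enc_rf X.

(* Main.v *)
Require Import Defs.
From mathcomp Require Import all_boot all_order all_algebra.
From mathcomp Require Import reals.
From mathcomp Require Import zify ring lra.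
Import Order.TTheory GRing.Theory Num.Theory.
Local Open Scope ring_scope.
Set Implicit Arguments. Unset Strict Implicit. Unset Printing Implicit Defensive.

Inductive instr := IOp of aop & nat & nat | IBr of nat & nat & nat & nat.
Definition I0 := IOp AAdd 0 0.

Definition ireads (ins : instr) : nat :=
  match ins with IOp _ a b => maxn a b | IBr a b x y => maxn (maxn a b) (maxn x y) end.

Definition ieval {R : realFieldType} (L : seq R) (ins : instr) : R :=
  match ins with
  | IOp o a b => aop_eval o (nth 0 L a) (nth 0 L b)
  | IBr a b x y => if nth 0 L a < nth 0 L b then nth 0 L x else nth 0 L y
  end.

Fixpoint compile (P : seq instr) (K : act_tree) : act_tree :=
  match P with
  | [::] => K
  | IOp o a b :: P' => Arith o a b (compile P' K)
  | IBr a b x y :: P' =>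
      Branch a b (Arith AAdd x 0 (compile P' K)) (Arith AAdd y 0 (compile P' K))
  end.

Definition exec {R : realFieldType} (regs : seq R) (P : seq instr) :=
  foldl (fun L ins => rcons L (ieval L ins)) regs P.

Section Machine.
Variable R : realFieldType.
Implicit Types (regs L : seq R) (P : seq instr).

Lemma exec_cons regs ins P : exec regs (ins :: P) = exec (rcons regs (ieval regs ins)) P.
Proof. by []. Qed.

Lemma exec_ext regs P : exists V, exec regs P = regs ++ V.
Proof.
elim: P regs => [|ins P IH] regs; first by exists [::]; rewrite cats0.
rewrite exec_cons; have [V ->] := IH (rcons regs (ieval regs ins)).
by exists (ieval regs ins :: V); rewrite -cats1 -catA.
Qed.

Lemma size_exec regs P : size (exec regs P) = (size regs + size P)%N.
Proof.
elim: P regs => [|ins P IH] regs; first by rewrite addn0.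
by rewrite exec_cons IH size_rcons /= addSnnS.
Qed.

Lemma exec_cat regs P1 P2 : exec regs (P1 ++ P2) = exec (exec regs P1) P2.
Proof. exact: foldl_cat. Qed.

Lemma exec_prefix regs P a : (a < size regs)%N -> nth 0 (exec regs P) a = nth 0 regs a.
Proof. by move=> ha; have [V ->] := exec_ext regs P; rewrite nth_cat ha. Qed.

Lemma ieval_ext L L' ins : (forall a, (a <= ireads ins)%N -> nth 0 L a = nth 0 L' a) ->
  ieval L ins = ieval L' ins.
Proof.
case: ins => [o a b|a b x y] /= h.
  by rewrite !h // leq_max leqnn ?orbT.
by rewrite !h // !leq_max leqnn ?orbT.
Qed.

Lemma cost_step a b s : (a <= 2 * s + b)%N -> (a.+1 <= 2 * s.+1 + b)%N.
Proof. lia. Qed.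
Lemma cost_step2 a b s : (a <= 2 * s + b)%N -> (a.+2 <= 2 * s.+1 + b)%N.
Proof. lia. Qed.

Lemma compile_run P K regs : nth 0 regs 0 = 0 -> (0 < size regs)%N ->
  act_run (compile P K) regs = act_run K (exec regs P) /\
  (act_cost (compile P K) regs <= 2 * size P + act_cost K (exec regs P))%N.
Proof.
elim: P regs => [|ins P IH] regs h0 hs; first by [].
rewrite exec_cons.
have H v : nth 0 (rcons regs v) 0 = 0 /\ (0 < size (rcons regs v))%N.
  by rewrite nth_rcons hs size_rcons.
case: ins => [o a b|a b x y] /=.
  have [h1 h2] := H (aop_eval o (nth 0 regs a) (nth 0 regs b)).
  have [-> c] := IH _ h1 h2; split=> //; exact: cost_step c.
case: ifP => _ /=; rewrite h0 addr0;
  [have [h1 h2] := H (nth 0 regs x)|have [h1 h2] := H (nth 0 regs y)]; have [-> c] := IH _ h1 h2; split=> //; exact: cost_step2 c.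
Qed.

Definition wf (s : nat) P := forall q, (q < size P)%N -> (ireads (nth I0 P q) < s + q)%N.

Lemma phase_nth regs pre PX post p :
  wf (size regs + size pre) PX -> (p < size PX)%N ->
  let L := exec regs (pre ++ PX ++ post) in
  nth 0 L (size regs + size pre + p) = ieval L (nth I0 PX p).
Proof.
move=> hwf hp L.
set M := exec regs pre.
have sM : size M = (size regs + size pre)%N by rewrite size_exec.
have EL : L = exec (exec M PX) post by rewrite /L !exec_cat.
pose E := exec M (take p PX).
have sE : size E = (size regs + size pre + p)%N by rewrite size_exec size_take hp sM.
have hPX : PX = take p PX ++ nth I0 PX p :: drop p.+1 PX.
  by rewrite -drop_nth // cat_take_drop.
have EL2 : L = exec (rcons E (ieval E (nth I0 PX p))) (drop p.+1 PX ++ post).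
  by rewrite EL {1}hPX exec_cat exec_cons -exec_cat.
have [V EV] := exec_ext (rcons E (ieval E (nth I0 PX p))) (drop p.+1 PX ++ post).
rewrite {1}EL2 EV nth_cat size_rcons -sE ltnSn nth_rcons ltnn eqxx.
apply: ieval_ext => a ha.
have haE : (a < size E)%N by rewrite sE -sM; have := hwf p hp; rewrite sM; lia.
by rewrite EL2 EV nth_cat size_rcons ltnS ltnW // nth_rcons haE.
Qed.

End Machine.

Definition grid {T} (c1 c2 : nat) (f : nat -> nat -> T) : seq T :=
  flatten (mkseq (fun a => mkseq (f a) c2) c1).

Lemma sumn_const_map T (s : seq T) c : sumn [seq c | _ <- s] = (size s * c)%N.
Proof. by elim: s => //= x s ->; rewrite mulSn. Qed.

Lemma size_grid T c1 c2 (f : nat -> nat -> T) : size (grid c1 c2 f) = (c1 * c2)%N.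
Proof.
rewrite /grid size_flatten /shape /mkseq -map_comp.
rewrite (eq_map (g := fun _ => c2)); last by move=> a /=; rewrite size_map size_iota.
by rewrite sumn_const_map size_iota.
Qed.

Lemma nth_flatten_unif T (x0 : T) (ss : seq (seq T)) c a b :
  all (fun s => size s == c) ss -> (b < c)%N -> (a < size ss)%N ->
  nth x0 (flatten ss) (a * c + b) = nth x0 (nth [::] ss a) b.
Proof.
elim: ss a => [|s ss IH] a //= /andP [/eqP sz hs] hb ha.
rewrite nth_cat sz; case: a ha => [|a] ha /=; first by rewrite mul0n add0n hb.
rewrite ifN; last by rewrite -leqNgt mulSn -addnA leq_addr.
by rewrite mulSn -addnA addKn IH.
Qed.

Lemma nth_grid T (x0 : T) c1 c2 f a b : (a < c1)%N -> (b < c2)%N ->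
  nth x0 (grid c1 c2 f) (a * c2 + b) = f a b.
Proof.
move=> ha hb; rewrite /grid nth_flatten_unif ?size_mkseq //.
  by rewrite nth_mkseq // nth_mkseq.
by rewrite /mkseq; elim: (iota 0 c1) => //= x s ->; rewrite size_mkseq eqxx.
Qed.

Lemma grid_lt c1 c2 a b : (a < c1)%N -> (b < c2)%N -> (a * c2 + b < c1 * c2)%N.
Proof.
move=> ha hb; apply: (@leq_trans (a.+1 * c2)); first by rewrite mulSn; lia.
by rewrite leq_mul2r ha orbT.
Qed.

Lemma wf_grid o c1 c2 f : (forall a b, (a < c1)%N -> (b < c2)%N -> (ireads (f a b) < o + (a * c2 + b))%N) ->
  wf o (grid c1 c2 f).
Proof.
move=> h q; rewrite size_grid => hq.
have c2p : (0 < c2)%N by move: hq; case: (c2) => //; rewrite muln0.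
have hb : (q %% c2 < c2)%N by rewrite ltn_pmod.
have ha : (q %/ c2 < c1)%N by rewrite ltn_divLR.
have E : q = (q %/ c2 * c2 + q %% c2)%N by apply: divn_eq.
have := h _ _ ha hb; rewrite -E.
have -> : nth I0 (grid c1 c2 f) q = f (q %/ c2)%N (q %% c2)%N by rewrite {1}E (nth_grid I0 f ha hb).
by [].
Qed.

Lemma wf_cat s P1 P2 : wf s P1 -> wf (s + size P1) P2 -> wf s (P1 ++ P2).
Proof.
move=> h1 h2 q; rewrite size_cat nth_cat => hq; case: ifP => hq1; first exact: h1.
have hle : (size P1 <= q)%N by rewrite leqNgt hq1.
have := h2 (q - size P1)%N; rewrite -addnA subnKC //; apply.
by rewrite ltn_subLR.
Qed.

Section Prog.
Variables (S n m k : nat) (bu off : nat -> nat).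
Local Open Scope nat_scope.

Definition N0 := 2 + S + S * k * m.
Definition xi a j := 2 + S + (a * m + j).
Definition oA := N0.
Definition oB := oA + S * k * m.
Definition oC := oB + S * k * m.
Definition oD := oC + S * k * (m + 1).
Definition oE := oD + S * (k + 1).
Definition oG := oE + S * 1.
Definition oH := oG + S * S.
Definition oI := oH + S * S.
Definition oJ := oI + S * (S + 1).
Definition oK := oJ + S * n.
Definition oL := oK + S * (n + 1).
Definition oM := oL + S * 1.
Definition oN := oM + S * 1.
Definition oO := oN + S * k.

Definition iA a j := oA + (a * m + j).
Definition iB a j := oB + (a * m + j).
Definition iC a j := oC + (a * (m + 1) + j).
Definition iD u w := oD + (u * (k + 1) + w).
Definition iE u := oE + (u * 1 + 0).
Definition iG u v := oG + (u * S + v).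
Definition iH u v := oH + (u * S + v).
Definition iI u p := oI + (u * (S + 1) + p).
Definition iJ u l := oJ + (u * n + l).
Definition iK u l := oK + (u * (n + 1) + l).
Definition iL u := oL + (u * 1 + 0).
Definition iM u := oM + (u * 1 + 0).
Definition iN u w := oN + (u * k + w).
Definition iO a j := oO + (a * m + j).

Definition cp x := IOp AAdd x 0.
Definition fA a j := if j is j'.+1 then IBr (iA a j') (xi a j) (xi a j) (iA a j') else cp (xi a 0).
Definition fB a j := IBr (xi a j) (iA a m.-1) 0 1.
Definition fC a j := if j is j'.+1 then IOp AAdd (iC a j') (iB a j') else cp 0.
Definition fD u w := if w is w'.+1 then IOp AAdd (iD u w') (iA (u * k + w') m.-1) else cp 0.
Definition fE u (_ : nat) := IOp ADiv (iD u k) (2 + u).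
Definition fG u v := if bu u == bu v then cp 1 else if bu u < bu v then IBr (iE u) (iE v) 0 1
                     else IBr (iE v) (iE u) 1 0.
Definition fH u v := IOp AMul (2 + v) (iG u v).
Definition fI u p := if p is p'.+1 then IOp AAdd (iI u p') (iH u p') else cp 0.
Definition fJ u l := IOp ASub (iI u (off l.+1)) (iI u (off l)).
Definition fK u l := if l is l'.+1 then IOp AMul (iK u l') (iJ u l') else cp 1.
Definition fL u (_ : nat) := IBr 0 (iE u) 1 0.
Definition fM u (_ : nat) := IOp AMul (iK u n) (iL u).
Definition fN u w := IOp ADiv (iM u) (iC (u * k + w) m).
Definition fO a j := IOp AMul (iB a j) (oN + a).

Definition PA := grid (S * k) m fA.
Definition PB := grid (S * k) m fB.
Definition PC := grid (S * k) (m + 1) fC.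
Definition PD := grid S (k + 1) fD.
Definition PE := grid S 1 fE.
Definition PG := grid S S fG.
Definition PH := grid S S fH.
Definition PI := grid S (S + 1) fI.
Definition PJ := grid S n fJ.
Definition PK := grid S (n + 1) fK.
Definition PL := grid S 1 fL.
Definition PM := grid S 1 fM.
Definition PN := grid S k fN.
Definition PO := grid (S * k) m fO.

Definition prog := PA ++ PB ++ PC ++ PD ++ PE ++ PG ++ PH ++ PI ++ PJ ++ PK ++ PL ++ PM ++ PN ++ PO.
Definition outl := [seq oO + p | p <- iota 0 (S * k * m)].
Definition tree := compile prog (Leaf outl).

Hypothesis mpos : 0 < m.
Hypothesis hoff : forall l, l < n -> off l <= off l.+1 <= S.

Ltac unf := unfold iA, iB, iC, iD, iE, iG, iH, iI, iJ, iK, iL, iM, iN, iO, xi, cp in *.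
Lemma offs : oA = N0 /\ oB = oA + S * k * m /\ oC = oB + S * k * m /\ oD = oC + S * k * (m + 1) /\ oE = oD + S * (k + 1) /\ oG = oE + S * 1 /\ oH = oG + S * S /\ oI = oH + S * S /\ oJ = oI + S * (S + 1) /\ oK = oJ + S * n /\ oL = oK + S * (n + 1) /\ oM = oL + S * 1 /\ oN = oM + S * 1 /\ oO = oN + S * k /\ N0 = 2 + S + S * k * m.
Proof. by []. Qed.
Ltac offs := have [? [? [? [? [? [? [? [? [? [? [? [? [? [? ?]]]]]]]]]]]]]] := offs.
Ltac wfs := apply: wf_grid => a b ha hb; rewrite /fA /fB /fC /fD /fE /fG /fH /fI /fJ /fK /fL /fM /fN /fO; offs.
Lemma mm1 : m.-1 < m. Proof. by rewrite prednK. Qed.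

Lemma wfA : wf oA PA.
Proof.
wfs; have h1 := grid_lt ha hb; case: b hb h1 => [|b] hb h1 /=; rewrite ?gtn_max; unf;
[|have h2 := grid_lt ha (ltnW hb)]; lia.
Qed.
Lemma wfB : wf oB PB.
Proof. wfs; have h1 := grid_lt ha hb; have h2 := grid_lt ha mm1; rewrite /= !gtn_max; unf; offs; lia. Qed.
Lemma wfC : wf oC PC.
Proof.
wfs; case: b hb => [|b] hb /=; rewrite ?gtn_max; unf; first lia.
have hb' : b < m by lia.
have h1 := grid_lt ha hb'; lia.
Qed.
Lemma wfD : wf oD PD.
Proof.
wfs; case: b hb => [|b] hb /=; rewrite ?gtn_max; unf; first lia.
have hb' : b < k by lia.
have h1 := grid_lt (grid_lt ha hb') mm1; lia.
Qed.
Lemma wfE : wf oE PE.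
Proof. wfs; have hk : k < k + 1 by lia. have h1 := grid_lt ha hk; rewrite /= gtn_max; unf; offs; lia. Qed.
Lemma wfG : wf oG PG.
Proof.
wfs; have h0 : 0 < 1 by []. have h1 := grid_lt ha h0; have h2 := grid_lt hb h0.
case: ifP => _; last case: ifP => _; rewrite /= ?gtn_max; unf; offs; lia.
Qed.
Lemma wfH : wf oH PH.
Proof. wfs; have h1 := grid_lt ha hb; rewrite /= gtn_max; unf; offs; lia. Qed.
Lemma wfI : wf oI PI.
Proof.
wfs; case: b hb => [|b] hb /=; rewrite ?gtn_max; unf; first lia.
have hb' : b < S by lia.
have h1 := grid_lt ha hb'; lia.
Qed.
Lemma wfJ : wf oJ PJ.
Proof.
wfs; have [h3 h4] := andP (hoff hb).
have h5 : off b.+1 < S + 1 by lia.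
have h1 := grid_lt ha h5; rewrite /= gtn_max; unf; offs; lia.
Qed.
Lemma wfK : wf oK PK.
Proof.
wfs; case: b hb => [|b] hb /=; rewrite ?gtn_max; unf; first lia.
have hb' : b < n by lia.
have h1 := grid_lt ha hb'; lia.
Qed.
Lemma wfL : wf oL PL.
Proof. wfs; have h0 : 0 < 1 by []. have h1 := grid_lt ha h0; rewrite /= !gtn_max; unf; offs; lia. Qed.
Lemma wfM : wf oM PM.
Proof.
wfs; have h0 : 0 < 1 by []. have hn : n < n + 1 by lia.
have h1 := grid_lt ha h0; have h2 := grid_lt ha hn; rewrite /= !gtn_max; unf; offs; lia.
Qed.
Lemma wfN : wf oN PN.
Proof.
wfs; have h0 : 0 < 1 by []. have hm : m < m + 1 by lia.
have h1 := grid_lt ha h0; have h2 := grid_lt (grid_lt ha hb) hm; rewrite /= !gtn_max; unf; offs; lia.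
Qed.
Lemma wfO : wf oO PO.
Proof. wfs; have h1 := grid_lt ha hb; rewrite /= !gtn_max; unf; offs; lia. Qed.



Lemma size_prog : n <= S -> size prog <= 12 * (S * k * m + S * S).
Proof.
move=> hn; rewrite /prog !size_cat /PA /PB /PC /PD /PE /PG /PH /PI /PJ /PK /PL /PM /PN /PO !size_grid.
rewrite !mulnDr !muln1.
have f1 : S * k <= S * k * m by rewrite leq_pmulr.
have f2 : S <= S * S by case: (S) => // s; rewrite leq_pmulr.
have f3 : S * n <= S * S by rewrite leq_mul2l hn orbT.
lia.
Qed.

Section Vals.
Local Open Scope ring_scope.
Variable R : realFieldType.
Variable regs : seq R.
Hypothesis hsz : size regs = N0.
Hypothesis h0 : nth 0 regs 0 = 0.
Hypothesis h1 : nth 0 regs 1 = 1.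

Definition Lr := exec regs prog.
Arguments Lr : simpl never.

Lemma at_phase (pre post : seq instr) c1 c2 f o a b :
  prog = pre ++ grid c1 c2 f ++ post -> o = (size regs + size pre)%N -> wf o (grid c1 c2 f) ->
  (a < c1)%N -> (b < c2)%N ->
  nth 0 Lr (o + (a * c2 + b)) = ieval Lr (f a b).
Proof.
move=> hP ho hwf ha hb; rewrite /Lr hP ho phase_nth -?ho //.
  by rewrite nth_grid.
by rewrite size_grid grid_lt.
Qed.

Lemma atA a b : (a < S * k)%N -> (b < m)%N -> nth 0 Lr (oA + (a * m + b)) = ieval Lr (fA a b).
Proof.
move=> ha hb; apply: (at_phase (pre := [::]) (post := PB ++ PC ++ PD ++ PE ++ PG ++ PH ++ PI ++ PJ ++ PK ++ PL ++ PM ++ PN ++ PO)); [by rewrite /prog !catA ?cats0 | by rewrite hsz ?size_cat ?size_grid /=; unf; offs; lia | exact: wfA | exact: ha | exact: hb].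
Qed.

Lemma atB a b : (a < S * k)%N -> (b < m)%N -> nth 0 Lr (oB + (a * m + b)) = ieval Lr (fB a b).
Proof.
move=> ha hb; apply: (at_phase (pre := PA) (post := PC ++ PD ++ PE ++ PG ++ PH ++ PI ++ PJ ++ PK ++ PL ++ PM ++ PN ++ PO)); [by rewrite /prog !catA ?cats0 | by rewrite hsz ?size_cat ?size_grid /=; unf; offs; lia | exact: wfB | exact: ha | exact: hb].
Qed.

Lemma atC a b : (a < S * k)%N -> (b < (m + 1))%N -> nth 0 Lr (oC + (a * (m + 1) + b)) = ieval Lr (fC a b).
Proof.
move=> ha hb; apply: (at_phase (pre := PA ++ PB) (post := PD ++ PE ++ PG ++ PH ++ PI ++ PJ ++ PK ++ PL ++ PM ++ PN ++ PO)); [by rewrite /prog !catA ?cats0 | by rewrite hsz ?size_cat ?size_grid /=; unf; offs; lia | exact: wfC | exact: ha | exact: hb].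
Qed.

Lemma atD a b : (a < S)%N -> (b < (k + 1))%N -> nth 0 Lr (oD + (a * (k + 1) + b)) = ieval Lr (fD a b).
Proof.
move=> ha hb; apply: (at_phase (pre := PA ++ PB ++ PC) (post := PE ++ PG ++ PH ++ PI ++ PJ ++ PK ++ PL ++ PM ++ PN ++ PO)); [by rewrite /prog !catA ?cats0 | by rewrite hsz ?size_cat ?size_grid /=; unf; offs; lia | exact: wfD | exact: ha | exact: hb].
Qed.

Lemma atE a b : (a < S)%N -> (b < 1)%N -> nth 0 Lr (oE + (a * 1 + b)) = ieval Lr (fE a b).
Proof.
move=> ha hb; apply: (at_phase (pre := PA ++ PB ++ PC ++ PD) (post := PG ++ PH ++ PI ++ PJ ++ PK ++ PL ++ PM ++ PN ++ PO)); [by rewrite /prog !catA ?cats0 | by rewrite hsz ?size_cat ?size_grid /=; unf; offs; lia | exact: wfE | exact: ha | exact: hb].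
Qed.

Lemma atG a b : (a < S)%N -> (b < S)%N -> nth 0 Lr (oG + (a * S + b)) = ieval Lr (fG a b).
Proof.
move=> ha hb; apply: (at_phase (pre := PA ++ PB ++ PC ++ PD ++ PE) (post := PH ++ PI ++ PJ ++ PK ++ PL ++ PM ++ PN ++ PO)); [by rewrite /prog !catA ?cats0 | by rewrite hsz ?size_cat ?size_grid /=; unf; offs; lia | exact: wfG | exact: ha | exact: hb].
Qed.

Lemma atH a b : (a < S)%N -> (b < S)%N -> nth 0 Lr (oH + (a * S + b)) = ieval Lr (fH a b).
Proof.
move=> ha hb; apply: (at_phase (pre := PA ++ PB ++ PC ++ PD ++ PE ++ PG) (post := PI ++ PJ ++ PK ++ PL ++ PM ++ PN ++ PO)); [by rewrite /prog !catA ?cats0 | by rewrite hsz ?size_cat ?size_grid /=; unf; offs; lia | exact: wfH | exact: ha | exact: hb].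
Qed.

Lemma atI a b : (a < S)%N -> (b < (S + 1))%N -> nth 0 Lr (oI + (a * (S + 1) + b)) = ieval Lr (fI a b).
Proof.
move=> ha hb; apply: (at_phase (pre := PA ++ PB ++ PC ++ PD ++ PE ++ PG ++ PH) (post := PJ ++ PK ++ PL ++ PM ++ PN ++ PO)); [by rewrite /prog !catA ?cats0 | by rewrite hsz ?size_cat ?size_grid /=; unf; offs; lia | exact: wfI | exact: ha | exact: hb].
Qed.

Lemma atJ a b : (a < S)%N -> (b < n)%N -> nth 0 Lr (oJ + (a * n + b)) = ieval Lr (fJ a b).
Proof.
move=> ha hb; apply: (at_phase (pre := PA ++ PB ++ PC ++ PD ++ PE ++ PG ++ PH ++ PI) (post := PK ++ PL ++ PM ++ PN ++ PO)); [by rewrite /prog !catA ?cats0 | by rewrite hsz ?size_cat ?size_grid /=; unf; offs; lia | exact: wfJ | exact: ha | exact: hb].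
Qed.

Lemma atK a b : (a < S)%N -> (b < (n + 1))%N -> nth 0 Lr (oK + (a * (n + 1) + b)) = ieval Lr (fK a b).
Proof.
move=> ha hb; apply: (at_phase (pre := PA ++ PB ++ PC ++ PD ++ PE ++ PG ++ PH ++ PI ++ PJ) (post := PL ++ PM ++ PN ++ PO)); [by rewrite /prog !catA ?cats0 | by rewrite hsz ?size_cat ?size_grid /=; unf; offs; lia | exact: wfK | exact: ha | exact: hb].
Qed.

Lemma atL a b : (a < S)%N -> (b < 1)%N -> nth 0 Lr (oL + (a * 1 + b)) = ieval Lr (fL a b).
Proof.
move=> ha hb; apply: (at_phase (pre := PA ++ PB ++ PC ++ PD ++ PE ++ PG ++ PH ++ PI ++ PJ ++ PK) (post := PM ++ PN ++ PO)); [by rewrite /prog !catA ?cats0 | by rewrite hsz ?size_cat ?size_grid /=; unf; offs; lia | exact: wfL | exact: ha | exact: hb].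
Qed.

Lemma atM a b : (a < S)%N -> (b < 1)%N -> nth 0 Lr (oM + (a * 1 + b)) = ieval Lr (fM a b).
Proof.
move=> ha hb; apply: (at_phase (pre := PA ++ PB ++ PC ++ PD ++ PE ++ PG ++ PH ++ PI ++ PJ ++ PK ++ PL) (post := PN ++ PO)); [by rewrite /prog !catA ?cats0 | by rewrite hsz ?size_cat ?size_grid /=; unf; offs; lia | exact: wfM | exact: ha | exact: hb].
Qed.

Lemma atN a b : (a < S)%N -> (b < k)%N -> nth 0 Lr (oN + (a * k + b)) = ieval Lr (fN a b).
Proof.
move=> ha hb; apply: (at_phase (pre := PA ++ PB ++ PC ++ PD ++ PE ++ PG ++ PH ++ PI ++ PJ ++ PK ++ PL ++ PM) (post := PO)); [by rewrite /prog !catA ?cats0 | by rewrite hsz ?size_cat ?size_grid /=; unf; offs; lia | exact: wfN | exact: ha | exact: hb].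
Qed.

Lemma atO a b : (a < S * k)%N -> (b < m)%N -> nth 0 Lr (oO + (a * m + b)) = ieval Lr (fO a b).
Proof.
move=> ha hb; apply: (at_phase (pre := PA ++ PB ++ PC ++ PD ++ PE ++ PG ++ PH ++ PI ++ PJ ++ PK ++ PL ++ PM ++ PN) (post := [::])); [by rewrite /prog !catA ?cats0 | by rewrite hsz ?size_cat ?size_grid /=; unf; offs; lia | exact: wfO | exact: ha | exact: hb].
Qed.

Lemma Lin a : (a < N0)%N -> nth 0 Lr a = nth 0 regs a.
Proof. by move=> ha; rewrite /Lr exec_prefix // hsz. Qed.
Lemma L0 : nth 0 Lr 0 = 0.
Proof. by rewrite Lin // /N0. Qed.
Lemma L1 : nth 0 Lr 1 = 1.
Proof. by rewrite Lin // /N0. Qed.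


Definition xa a j := nth 0 regs (xi a j).
Definition fa u := nth 0 regs (2 + u).
Fixpoint mx a j := if j is j'.+1 then Num.max (mx a j') (xa a j) else xa a 0.
Definition Mw a := mx a m.-1.
Definition ev a j : R := if xa a j < Mw a then 0 else 1.
Definition cc a j := \sum_(j' < j) ev a j'.
Definition Mt u := \sum_(w < k) Mw (u * k + w).
Definition vv u := Mt u / fa u.
Definition beatb u v := if bu u == bu v then true else if (bu u < bu v)%N then ~~ (vv u < vv v)
  else vv v < vv u.
Definition gg u v := fa v * (beatb u v)%:R.
Definition II u p := \sum_(p' < p) gg u p'.
Definition Sig u l := II u (off l.+1) - II u (off l).
Definition Kp u l := \prod_(l' < l) Sig u l'.
Definition pos u : R := ((0 < vv u)%R)%:R.
Definition qq u := Kp u n * pos u.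
Definition rN u w := qq u / cc (u * k + w) m.

Lemma xiN0 a j : (a < S * k)%N -> (j < m)%N -> (xi a j < N0)%N.
Proof. by move=> ha hj; have := grid_lt ha hj; unf; offs; lia. Qed.

Lemma VA a j : (a < S * k)%N -> (j < m)%N -> nth 0 Lr (iA a j) = mx a j.
Proof.
move=> ha; elim: j => [|j IH] hj.
  by rewrite /iA (atA ha hj) [ieval _ _]/= L0 addr0 Lin // xiN0.
by rewrite /iA (atA ha hj) [ieval _ _]/= -/(iA a j) IH ?(ltnW hj) // Lin // xiN0.
Qed.

Lemma VB a j : (a < S * k)%N -> (j < m)%N -> nth 0 Lr (iB a j) = ev a j.
Proof.
by move=> ha hj; rewrite /iB (atB ha hj) [ieval _ _]/= -/(iA a m.-1) VA ?mm1 // Lin ?xiN0 // L0 L1.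
Qed.

Lemma VC a j : (a < S * k)%N -> (j <= m)%N -> nth 0 Lr (iC a j) = cc a j.
Proof.
move=> ha; elim: j => [|j IH] hj.
  by rewrite /iC (atC ha (_ : 0 < m + 1)%N) ?addn1 // [ieval _ _]/= L0 addr0 /cc big_ord0.
rewrite /iC (atC ha (_ : j.+1 < m + 1)%N) ?addn1 ?ltnS // [ieval _ _]/= -/(iC a j) -/(iB a j).
by rewrite IH ?(ltnW hj) // VB // /cc big_ord_recr.
Qed.

Lemma VD u w : (u < S)%N -> (w <= k)%N -> nth 0 Lr (iD u w) = \sum_(w' < w) Mw (u * k + w').
Proof.
move=> hu; elim: w => [|w IH] hw.
  by rewrite /iD (atD hu (_ : 0 < k + 1)%N) ?addn1 // [ieval _ _]/= L0 addr0 big_ord0.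
rewrite /iD (atD hu (_ : w.+1 < k + 1)%N) ?addn1 ?ltnS // [ieval _ _]/= -/(iD u w) -/(iA _ _).
by rewrite IH ?(ltnW hw) // VA ?mm1 ?grid_lt // big_ord_recr.
Qed.

Lemma VE u : (u < S)%N -> nth 0 Lr (iE u) = vv u.
Proof.
move=> hu; rewrite /iE (atE hu (_ : 0 < 1)%N) // [ieval _ _]/= -/(iD u k) VD // Lin //.
by unf; offs; lia.
Qed.

Lemma VG u v : (u < S)%N -> (v < S)%N -> nth 0 Lr (iG u v) = (beatb u v)%:R.
Proof.
move=> hu hv; rewrite /iG (atG hu hv) /fG /beatb.
case: ifP => _; first by rewrite [ieval _ _]/= L1 L0 addr0.
case: ifP => _; rewrite [ieval _ _]/= -!/(iE _) !VE // L0 L1; by case: ifP.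
Qed.

Lemma VH u v : (u < S)%N -> (v < S)%N -> nth 0 Lr (iH u v) = gg u v.
Proof.
move=> hu hv; rewrite /iH (atH hu hv) [ieval _ _]/= -/(iG u v) VG // Lin //.
by unf; offs; lia.
Qed.

Lemma VI u p : (u < S)%N -> (p <= S)%N -> nth 0 Lr (iI u p) = II u p.
Proof.
move=> hu; elim: p => [|p IH] hp.
  by rewrite /iI (atI hu (_ : 0 < S + 1)%N) ?addn1 // [ieval _ _]/= L0 addr0 /II big_ord0.
rewrite /iI (atI hu (_ : p.+1 < S + 1)%N) ?addn1 ?ltnS // [ieval _ _]/= -/(iI u p) -/(iH _ _).
by rewrite IH ?(ltnW hp) // VH // /II big_ord_recr.
Qed.

Lemma VJ u l : (u < S)%N -> (l < n)%N -> nth 0 Lr (iJ u l) = Sig u l.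
Proof.
move=> hu hl; have /andP [h3 h4] := hoff hl.
by rewrite /iJ (atJ hu hl) [ieval _ _]/= -!/(iI _ _) !VI // (leq_trans h3 h4).
Qed.

Lemma VK u l : (u < S)%N -> (l <= n)%N -> nth 0 Lr (iK u l) = Kp u l.
Proof.
move=> hu; elim: l => [|l IH] hl.
  by rewrite /iK (atK hu (_ : 0 < n + 1)%N) ?addn1 // [ieval _ _]/= L0 L1 addr0 /Kp big_ord0.
rewrite /iK (atK hu (_ : l.+1 < n + 1)%N) ?addn1 ?ltnS // [ieval _ _]/= -/(iK u l) -/(iJ _ _).
by rewrite IH ?(ltnW hl) // VJ // /Kp big_ord_recr.
Qed.

Lemma VL u : (u < S)%N -> nth 0 Lr (iL u) = pos u.
Proof.
move=> hu; rewrite /iL (atL hu (_ : 0 < 1)%N) // [ieval _ _]/= -/(iE u) VE // L0 L1 /pos.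
by case: ifP.
Qed.

Lemma VM u : (u < S)%N -> nth 0 Lr (iM u) = qq u.
Proof.
by move=> hu; rewrite /iM (atM hu (_ : 0 < 1)%N) // [ieval _ _]/= -/(iK u n) -/(iL u) VK // VL.
Qed.

Lemma VN u w : (u < S)%N -> (w < k)%N -> nth 0 Lr (iN u w) = rN u w.
Proof.
move=> hu hw; rewrite /iN (atN hu hw) [ieval _ _]/= -/(iM u) -/(iC _ _) VM // VC //.
exact: grid_lt.
Qed.

Lemma VO u w j : (u < S)%N -> (w < k)%N -> (j < m)%N ->
  nth 0 Lr (iO (u * k + w) j) = ev (u * k + w) j * rN u w.
Proof.
move=> hu hw hj; have ha := grid_lt hu hw.
by rewrite /iO (atO ha hj) [ieval _ _]/= -/(iB _ _) -/(iN u w) VB // VN.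
Qed.


Lemma mx_ge a j0 j : (j <= j0)%N -> xa a j <= mx a j0.
Proof.
elim: j0 => [|j0 IH] hj; first by move: hj; rewrite leqn0 => /eqP ->.
rewrite /= le_max; case: (ltngtP j j0.+1) => h.
- by rewrite IH.
- by move: h; rewrite ltnNge hj.
- by rewrite h lexx orbT.
Qed.

Lemma mx_att a j0 : exists2 j, (j <= j0)%N & xa a j = mx a j0.
Proof.
elim: j0 => [|j0 [j hj e]]; first by exists 0%N.
have -> : mx a j0.+1 = if mx a j0 < xa a j0.+1 then xa a j0.+1 else mx a j0 by [].
case: ifP => _; first by exists j0.+1.
by exists j => //; rewrite (leq_trans hj).
Qed.

Lemma Mw_ge a (j : nat) : (j < m)%N -> xa a j <= Mw a.
Proof. by move=> hj; apply: mx_ge; rewrite -ltnS prednK. Qed.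

Lemma ev_ge0 a j : 0 <= ev a j.
Proof. by rewrite /ev; case: ifP. Qed.

Lemma ev_sum a : \sum_(j < m) ev a j * xa a j = cc a m * Mw a.
Proof.
rewrite /cc mulr_suml; apply: eq_bigr => j _; rewrite /ev.
case: ifP => h; first by rewrite !mul0r.
by rewrite !mul1r; apply/eqP; rewrite eq_le Mw_ge // leNgt h.
Qed.

Lemma cc_pos a : 0 < cc a m.
Proof.
have [j hj e] := mx_att a m.-1.
have hj' : (j < m)%N by rewrite (leq_ltn_trans hj) // mm1.
rewrite /cc (bigD1 (Ordinal hj')) //= /ev.
have -> : xa a j < Mw a = false by rewrite /Mw e ltxx.
by rewrite ltr_pwDl // sumr_ge0 // => i _; apply: ev_ge0.
Qed.

Lemma tree_run : act_run tree regs = [seq nth 0 Lr (oO + p) | p <- iota 0 (S * k * m)] /\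
  (act_cost tree regs <= 2 * size prog)%N.
Proof.
have hs : (0 < size regs)%N by rewrite hsz /N0.
have [e c] := compile_run prog (Leaf outl) h0 hs.
rewrite /tree e; split; first by rewrite /outl /= -map_comp.
by move: c; rewrite /= addn0.
Qed.
End Vals.
End Prog.

Section Factor.
Variable R : realFieldType.

Lemma dffun_sum_prod (I : finType) (T_ : I -> finType) (H : forall i, T_ i -> R) :
  \sum_(f : {dffun forall i, T_ i}) \prod_i H i (f i) = \prod_i \sum_(x : T_ i) H i x.
Proof.
pose J := {i : I & T_ i}.
pose H' (y : J) := H (tag y) (tagged y).
have E1 i : \sum_(x : T_ i) H i x = \sum_(y : J | tagged_with T_ i y) H' y.
  rewrite -[LHS](@big_pred1_eq R 0 +%R _ i (fun i0 => \sum_(x : T_ i0) H i0 x)) /=.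
  rewrite sig_big_dep /=.
  by apply: eq_bigl => y; rewrite andbT.
under [RHS]eq_bigr do rewrite E1.
rewrite (bigA_distr_big_dep (tagged_with T_) (fun _ y => H' y)).
rewrite [RHS]big_sub.
rewrite [RHS](reindex (@to_family_tagged_with I T_)); last first.
  by apply: onW_bij; apply: to_family_tagged_with_bij.
rewrite [RHS](reindex (@fprod_of_dffun I T_)); last first.
  by apply: onW_bij; apply: fprod_of_dffun_bij.
apply: eq_bigr => f _; apply: eq_bigr => i _ /=.
rewrite /H' /fprod_of_dffun /fprod_of_fun /= ffunE /=.
by [].
Qed.

End Factor.

Section Winner.
Variables (R : realFieldType) (n : nat) (a : 'I_n -> R).

Definition beat (i l : 'I_n) : bool :=
  if i == l then true else if (i < l)%N then ~~ (a i < a l) else a l < a i.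
Definition win i := (0 < a i) && [forall l, (l != i) ==> beat i l].

Lemma win_max i : win i -> forall l, a l <= a i.
Proof.
case/andP=> _ /forallP h l; have := h l; case: (eqVneq l i) => [->|nli] //= hb.
move: hb; rewrite /beat eq_sym (negbTE nli); case: ifP => _; first by rewrite -leNgt.
exact: ltW.
Qed.

Lemma win_uniq i l : win i -> win l -> i = l.
Proof.
move=> wi wl; apply/eqP; apply: contraT => nil.
have /andP [_ /forallP hi] := wi; have /andP [_ /forallP hl] := wl.
have bil : beat i l by have := hi l; rewrite eq_sym nil.
have bli : beat l i by have := hl i; rewrite nil.
move: bil bli; rewrite /beat (negbTE nil) eq_sym (negbTE nil).
case: (ltngtP i l) => h /=.
- by move=> /negP.
- by move=> h1 /negP.
- by move/val_inj: h nil => ->; rewrite eqxx.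
Qed.

Lemma win_others i l : win i -> l != i -> win l = false.
Proof. by move=> wi nli; apply: contraNF nli => wl; rewrite (win_uniq wl wi). Qed.

Lemma win_exists l0 : 0 < a l0 -> exists i, win i.
Proof.
move=> hl0.
pose ord := fun x y : R => y <= x.
have ord_refl : reflexive ord by move=> x; exact: le_refl.
have ord_trans : transitive ord by move=> x y z hyx hzy; exact: le_trans hzy hyx.
have ord_total : total ord by move=> x y; rewrite /ord orbC le_total.
have [im _ him] := @extremumP _ _ ord l0 xpredT a ord_refl ord_trans ord_total (erefl true).
have [j /eqP hj hmin] := @arg_minnP _ im (fun j => a j == a im) (fun j : 'I_n => (j : nat)) (eqxx (a im)).
exists j; apply/andP; split.
  by rewrite hj; apply: lt_le_trans hl0 (him _ _).
apply/forallP => l; apply/implyP => nlj; rewrite /beat eq_sym (negbTE nlj).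
have hle : a l <= a j by rewrite hj; exact: him.
case: ifP => hjl; first by rewrite -leNgt.
rewrite lt_neqAle hle andbT; apply/negP => /eqP e.
have := hmin l; rewrite e hj eqxx => /(_ isT).
have : (l < j)%N by rewrite ltn_neqAle leqNgt hjl andbT; apply: contra nlj => /eqP/val_inj ->.
by move=> h1 h2; move: (leq_trans h1 h2); rewrite ltnn.
Qed.

Lemma win_opt (p : 'I_n -> R) : (forall i, 0 <= p i) -> \sum_i p i <= 1 ->
  \sum_i p i * a i <= \sum_i (win i)%:R * a i.
Proof.
move=> p0 p1.
case: (pickP win) => [i wi|nw].
  rewrite [X in _ <= X](bigD1 i) //= [X in _ <= _ + X]big1 => [|l nli]; last by rewrite (win_others wi nli) mul0r.
  rewrite wi mul1r addr0.
  have ai0 : 0 <= a i by have /andP [/ltW] := wi.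
  apply: (@le_trans _ _ (\sum_l p l * a i)).
    by apply: ler_sum => l _; apply: ler_wpM2l => //; apply: win_max.
  by rewrite -mulr_suml; apply: ler_piMl.
rewrite [X in _ <= X]big1 => [|l _]; last by rewrite nw mul0r.
apply: sumr_le0 => l _; apply: mulr_ge0_le0 => //.
rewrite leNgt; apply/negP => hl; have [i wi] := win_exists hl.
by rewrite nw in wi.
Qed.

Lemma win_sum : \sum_i (win i)%:R <= 1 :> R.
Proof.
case: (pickP win) => [i wi|nw].
  rewrite (bigD1 i) //= big1 => [|l nli]; last by rewrite (win_others wi nli).
  by rewrite wi addr0.
by rewrite big1 => [|l _]; rewrite ?nw.
Qed.

End Winner.

Lemma obj_rf (R : realFieldType) (n m k : nat) (t : 'I_n -> nat)
  (F : forall i : 'I_n, 'I_(t i) -> R) (pi : profile t -> 'I_n -> 'I_k -> 'I_m -> R)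
  (X : rf_type R n m k t) :
  rf_objective (reduced_form F pi) X =
  \sum_(th : profile t) \sum_(i < n) (\prod_(l < n | l != i) F l (th l)) *
     \sum_(w < k) \sum_(j < m) pi th i w j * X i (th i) w j.
Proof.
rewrite /rf_objective /reduced_form [RHS]exchange_big /=.
apply: eq_bigr => i _.
rewrite [RHS](partition_big (fun th : profile t => th i) xpredT) //=.
apply: eq_bigr => th0 _.
under eq_bigr do under eq_bigr do rewrite big_distrl /=.
under eq_bigr do rewrite exchange_big /=.
rewrite exchange_big /=; apply: eq_bigr => th /eqP hth.
rewrite hth mulr_sumr; apply: eq_bigr => w _; rewrite mulr_sumr; apply: eq_bigr => j _.
by rewrite mulrA.
Qed.

Lemma nth_flatten_off T (x0 : T) (ss : seq (seq T)) r c :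
  (r < size ss)%N -> (c < size (nth [::] ss r))%N ->
  nth x0 (flatten ss) (sumn (take r (shape ss)) + c) = nth x0 (nth [::] ss r) c.
Proof.
elim: ss r => [|s ss IH] [|r] //= hr hc; first by rewrite nth_cat hc.
rewrite nth_cat ifN; last by rewrite -leqNgt -addnA leq_addr.
by rewrite -addnA addKn IH.
Qed.

Lemma flatten_map_flatten (A B : Type) (f : A -> seq B) (ss : seq (seq A)) :
  flatten (map f (flatten ss)) = flatten (map (fun s => flatten (map f s)) ss).
Proof. by elim: ss => //= s ss IH; rewrite map_cat flatten_cat IH. Qed.

Lemma nth_cat_add T (x0 : T) s1 s2 q : nth x0 (s1 ++ s2) (size s1 + q) = nth x0 s2 q.
Proof. by rewrite nth_cat ifN ?addKn // -leqNgt leq_addr. Qed.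

Section Tys.
Variables (n : nat) (t : 'I_n -> nat).
Local Notation J := {i : 'I_n & 'I_(t i)}.

Definition tyblk (i : 'I_n) : seq J := map (@Tagged 'I_n i (fun i => 'I_(t i))) (enum 'I_(t i)).
Definition tys := flatten (map tyblk (enum 'I_n)).
Definition ts := [seq t i | i <- enum 'I_n].
Definition off l := sumn (take l ts).
Definition Sx := (\sum_(i < n) t i)%N.

Lemma shape_tys : shape (map tyblk (enum 'I_n)) = ts.
Proof. by rewrite /shape -map_comp; apply: eq_map => i /=; rewrite size_map size_enum_ord. Qed.

Lemma sumn_ts : sumn ts = Sx.
Proof. by rewrite /ts sumnE big_map big_enum. Qed.

Lemma size_tys : size tys = Sx.
Proof. by rewrite /tys size_flatten shape_tys sumn_ts. Qed.

Lemma size_ts : size ts = n.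
Proof. by rewrite size_map size_enum_ord. Qed.

Lemma nth_ts (l : 'I_n) : nth 0%N ts l = t l.
Proof. by rewrite (nth_map l) ?size_enum_ord // nth_ord_enum. Qed.

Lemma offS (l : 'I_n) : off l.+1 = (off l + t l)%N.
Proof. by rewrite /off (take_nth 0%N) ?size_ts // sumn_rcons nth_ts. Qed.

Lemma off_le l : (off l <= Sx)%N.
Proof. by rewrite /off -sumn_ts -{2}(cat_take_drop l ts) sumn_cat leq_addr. Qed.

Lemma hoff l : (l < n)%N -> (off l <= off l.+1 <= Sx)%N.
Proof. by move=> hl; rewrite off_le andbT (offS (Ordinal hl)) leq_addr. Qed.

Lemma off_lt (i : 'I_n) (th : 'I_(t i)) : (off i + th < Sx)%N.
Proof. by apply: leq_trans (off_le i.+1); rewrite offS ltn_add2l. Qed.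

Lemma nth_tys x0 (i : 'I_n) (th : 'I_(t i)) : nth x0 tys (off i + th) = Tagged (fun i => 'I_(t i)) th.
Proof.
rewrite /tys /off -shape_tys nth_flatten_off ?size_map ?size_enum_ord //.
  rewrite (nth_map i) ?size_enum_ord // ?nth_ord_enum.
  - by rewrite (nth_map th) ?size_enum_ord // ?nth_ord_enum // -enumT size_enum_ord.
  - by rewrite -enumT size_enum_ord.
by rewrite (nth_map i) ?size_enum_ord // ?nth_ord_enum ?size_map ?size_enum_ord // -enumT size_enum_ord.
Qed.

Lemma mem_tys (x : J) : x \in tys.
Proof.
case: x => i th; apply/flattenP; exists (tyblk i); first by apply: map_f; rewrite mem_enum.
by apply: map_f; rewrite mem_enum.
Qed.

Lemma uniq_tys : uniq tys.
Proof.
apply: (leq_size_uniq (enum_uniq (J : finType))).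
  by move=> x _; apply: mem_tys.
rewrite size_tys -cardE card_tagged -sumn_ts /ts; apply: eq_leq; congr sumn.
by apply: eq_map => i; rewrite card_ord.
Qed.

Lemma index_tys (i : 'I_n) (th : 'I_(t i)) : index (Tagged (fun i => 'I_(t i)) th) tys = (off i + th)%N.
Proof.
have x0 : J := Tagged (fun i => 'I_(t i)) th.
by rewrite -(nth_tys x0 th) index_uniq ?uniq_tys // size_tys off_lt.
Qed.

End Tys.

Section Enc.
Variables (R : realFieldType) (n m k : nat) (t : 'I_n -> nat).
Local Notation J := {i : 'I_n & 'I_(t i)}.

Lemma enc_dist_tys (F : forall i : 'I_n, 'I_(t i) -> R) :
  enc_dist F = [seq F (tag x) (tagged x) | x <- tys t].
Proof.
rewrite /enc_dist /tys map_flatten -map_comp; congr flatten; apply: eq_map => i /=.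
by rewrite /tyblk -map_comp.
Qed.

Definition blk (X : rf_type R n m k t) (x : J) : seq R :=
  flatten [seq [seq X (tag x) (tagged x) w j | j <- enum 'I_m] | w <- enum 'I_k].

Lemma enc_rf_tys (X : rf_type R n m k t) : enc_rf X = flatten [seq blk X x | x <- tys t].
Proof.
rewrite /tys flatten_map_flatten -map_comp /enc_rf; congr flatten; apply: eq_map => i /=.
by rewrite /tyblk -map_comp.
Qed.

Lemma size_blk (X : rf_type R n m k t) x : size (blk X x) = (k * m)%N.
Proof.
rewrite /blk size_flatten /shape -map_comp.
rewrite (eq_map (g := fun _ => m)); last by move=> w /=; rewrite size_map size_enum_ord.
by rewrite sumn_const_map size_enum_ord.
Qed.

Lemma size_enc_rf (X : rf_type R n m k t) : size (enc_rf X) = (Sx t * k * m)%N.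
Proof.
rewrite enc_rf_tys size_flatten /shape -map_comp.
rewrite (eq_map (g := fun _ => (k * m)%N)); last by move=> x /=; rewrite size_blk.
by rewrite sumn_const_map size_tys mulnA.
Qed.

Lemma size_enc_dist (F : forall i : 'I_n, 'I_(t i) -> R) : size (enc_dist F) = Sx t.
Proof. by rewrite enc_dist_tys size_map size_tys. Qed.

Lemma nth_enc_rf x0 (X : rf_type R n m k t) u (w : 'I_k) (j : 'I_m) : (u < Sx t)%N ->
  nth 0 (enc_rf X) ((u * k + w) * m + j) = X (tag (nth x0 (tys t) u)) (tagged (nth x0 (tys t) u)) w j.
Proof.
move=> hu; rewrite enc_rf_tys.
have -> : ((u * k + w) * m + j = u * (k * m) + (w * m + j))%N by rewrite mulnDl mulnA addnA.
have hall : all (fun s => size s == (k * m)%N) [seq blk X x | x <- tys t].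
  by rewrite all_map; apply/allP => x _ /=; rewrite size_blk.
have hwm : (w * m + j < k * m)%N by apply: grid_lt.
have hu' : (u < size [seq blk X x | x <- tys t])%N by rewrite size_map size_tys.
rewrite (nth_flatten_unif _ hall hwm hu') (nth_map x0) ?size_tys // /blk.
have hall2 : all (fun s => size s == m) [seq [seq X (tag (nth x0 (tys t) u)) (tagged (nth x0 (tys t) u)) w0 j0 | j0 <- enum 'I_m] | w0 <- enum 'I_k].
  by rewrite all_map; apply/allP => w' _ /=; rewrite size_map size_enum_ord.
have hw' : (w < size [seq [seq X (tag (nth x0 (tys t) u)) (tagged (nth x0 (tys t) u)) w0 j0 | j0 <- enum 'I_m] | w0 <- enum 'I_k])%N.
  by rewrite size_map size_enum_ord.
rewrite (nth_flatten_unif _ hall2 (ltn_ord j) hw').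
by rewrite (nth_map w) ?size_enum_ord // nth_ord_enum (nth_map j) ?size_enum_ord // nth_ord_enum.
Qed.

End Enc.

Lemma bool_and_R (R : numDomainType) (b1 b2 : bool) : ((b1 && b2)%:R : R) = b1%:R * b2%:R.
Proof. by case: b1; case: b2; rewrite ?mul1r ?mul0r. Qed.

Lemma bool_prod_R (R : numDomainType) (I : finType) (P B : pred I) :
  ([forall l, P l ==> B l]%:R : R) = \prod_(l | P l) (B l)%:R.
Proof.
case: (boolP [forall l, P l ==> B l]) => h.
  by rewrite big1 // => l hl; move/forallP/(_ l): h; rewrite hl => /= ->.
move: h; rewrite negb_forall => /existsP [l]; rewrite negb_imply => /andP [hl hb].
by rewrite (bigD1 l) //= (negbTE hb) mul0r.
Qed.

Lemma factor_cond (R : realFieldType) (n : nat) (t : 'I_n -> nat) (i : 'I_n) (th0 : 'I_(t i))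
  (G : forall l : 'I_n, 'I_(t l) -> R) :
  \sum_(th : profile t | th i == th0) \prod_(l < n | l != i) G l (th l) =
  \prod_(l < n | l != i) \sum_(x : 'I_(t l)) G l x.
Proof.
pose H (l : 'I_n) (x : 'I_(t l)) := if l == i then ((val x == val th0)%:R : R) else G l x.
have E := dffun_sum_prod H.
have E2 : \prod_l \sum_(x : 'I_(t l)) H l x = \prod_(l < n | l != i) \sum_(x : 'I_(t l)) G l x.
  rewrite (bigD1 i) //=.
  have -> : \sum_(x : 'I_(t i)) H i x = 1.
    rewrite /H eqxx (bigD1 th0) //= eqxx big1 ?addr0 // => x hx.
    by rewrite (inj_eq val_inj) (negbTE hx).
  by rewrite mul1r; apply: eq_bigr => l hl; rewrite /H (negbTE hl).
rewrite -E2 -E big_mkcond /=; apply: eq_bigr => th _.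
rewrite [RHS](bigD1 i) //= {1}/H eqxx (inj_eq val_inj).
case: eqP => _; last by rewrite mul0r.
rewrite mul1r; apply: eq_bigr => l hl.
by rewrite /H (negbTE hl).
Qed.

Unset Implicit Arguments.
Section Main.
Variables (R : realFieldType) (n m k : nat) (t : 'I_n -> nat).
Hypotheses (ht : forall l, (0 < t l)%N) (hm : (0 < m)%N) (hk : (0 < k)%N) (hn : (0 < n)%N).
Local Notation J := {i : 'I_n & 'I_(t i)}.
Local Notation S := (Sx t).

Definition x0 : J := Tagged (fun i => 'I_(t i)) (Ordinal (ht (Ordinal hn))).
Definition bu (u : nat) : nat := val (tag (nth x0 (tys t) u)).

Lemma bu_off (i : 'I_n) (th : 'I_(t i)) : bu (off t i + th) = i.
Proof. by rewrite /bu nth_tys. Qed.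

Variables (F : forall i : 'I_n, 'I_(t i) -> R) (X : rf_type R n m k t).
Hypotheses (hF : forall (i : 'I_n) (th : 'I_(t i)), 0 < F i th) (hs : forall i : 'I_n, \sum_(th < t i) F i th = 1).

Definition regs0 := act_input F X.

Lemma size_regs0 : size regs0 = N0 S m k.
Proof. by rewrite /regs0 /act_input !size_cat size_enc_dist size_enc_rf. Qed.

Lemma fa_off (i : 'I_n) (th : 'I_(t i)) : fa regs0 (off t i + th) = F i th.
Proof.
rewrite /fa /regs0 /act_input (nth_cat_add _ [:: 0; 1]) nth_cat size_enc_dist off_lt.
by rewrite enc_dist_tys (nth_map x0) ?size_tys ?off_lt // nth_tys.
Qed.

Lemma xa_off (i : 'I_n) (th : 'I_(t i)) (w : 'I_k) (j : 'I_m) :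
  xa S m regs0 ((off t i + th) * k + w) j = X i th w j.
Proof.
rewrite /xa /xi /regs0 /act_input -addnA (nth_cat_add _ [:: 0; 1]).
rewrite -(size_enc_dist F) nth_cat_add (nth_enc_rf x0) ?off_lt //.
by rewrite nth_tys.
Qed.

Local Notation vvR := (vv S m k regs0).
Local Notation evR := (ev S m regs0).
Local Notation ccR := (cc S m regs0).
Local Notation MtR := (Mt S m k regs0).
Local Notation MwR := (Mw S m regs0).
Local Notation bb := (beatb S m k bu regs0).

Definition uu (th : profile t) (i : 'I_n) : nat := (off t i + th i)%N.
Definition aa (th : profile t) (l : 'I_n) : R := vvR (uu th l).
Definition Wn th i : R := (win (aa th) i)%:R.
Definition pio (th : profile t) (i : 'I_n) (w : 'I_k) (j : 'I_m) : R :=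
  Wn th i * (evR (uu th i * k + w) j / ccR (uu th i * k + w) m).

Lemma beat_eq th i l : beat (aa th) i l = bb (uu th i) (uu th l).
Proof. by rewrite /beat /beatb /uu !bu_off. Qed.

Lemma Wn_expand th i :
  Wn th i = pos S m k regs0 (uu th i) * \prod_(l | l != i) (bb (uu th i) (uu th l))%:R.
Proof.
rewrite /Wn /win bool_and_R bool_prod_R /pos /aa; congr (_ * _).
by apply: eq_bigr => l _; rewrite beat_eq.
Qed.

Lemma Wn_ge0 th i : 0 <= Wn th i.
Proof. by rewrite /Wn ler0n. Qed.

Lemma feas_ours : feasible_expost pio (fun th i => Wn th i).
Proof.
split.
- move=> th i w j; rewrite /pio mulr_ge0 ?Wn_ge0 // divr_ge0 ?ev_ge0 //.
  by apply: ltW; apply: cc_pos.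
- move=> th i w; rewrite /pio -mulr_sumr -mulr_suml.
  by rewrite -/(ccR (uu th i * k + w) m) divff ?mulr1 // gt_eqF // cc_pos.
- by move=> th; apply: win_sum.
Qed.

Lemma Sig_eq (u : nat) (l : 'I_n) :
  Sig S m k bu (off t) regs0 u l = \sum_(x < t l) F l x * (bb u (off t l + x))%:R.
Proof.
rewrite /Sig /II offS big_split_ord /= addrAC subrr add0r.
by apply: eq_bigr => x _; rewrite /gg fa_off.
Qed.

Lemma out_eq (i : 'I_n) (th0 : 'I_(t i)) (w : 'I_k) (j : 'I_m) :
  evR ((off t i + th0) * k + w) j * rN S n m k bu (off t) regs0 (off t i + th0) w =
  reduced_form F pio th0 w j.
Proof.
set u := (off t i + th0)%N.
rewrite /reduced_form.
have E : forall th : profile t, th i == th0 ->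
   (\prod_(l < n | l != i) F l (th l)) * pio th i w j =
   pos S m k regs0 u * (evR (u * k + w) j / ccR (u * k + w) m) *
   \prod_(l < n | l != i) (F l (th l) * (bb u (off t l + th l))%:R).
  move=> th /eqP hth; rewrite /pio Wn_expand /uu hth -/u big_split.
  by rewrite /=; ring.
rewrite (eq_bigr _ E) -mulr_sumr (factor_cond th0 (fun l (x : 'I_(t l)) => F l x * (bb u (off t l + x))%:R)).
rewrite /rN /qq /Kp.
rewrite (bigD1 i) //= Sig_eq.
have -> : \sum_(x < t i) F i x * (bb u (off t i + x))%:R = 1.
  rewrite -[RHS](hs i); apply: eq_bigr => x _.
  by rewrite /beatb /u !bu_off eqxx mulr1.
rewrite (eq_bigr _ (fun l _ => Sig_eq u l)) mul1r.
by rewrite /=; ring.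
Qed.



Lemma Fm_ge0 (th : profile t) i : 0 <= \prod_(l < n | l != i) F l (th l).
Proof. by apply: prodr_ge0 => l _; apply: ltW. Qed.

Lemma FmMt (th : profile t) i :
  (\prod_(l < n | l != i) F l (th l)) * MtR (uu th i) = (\prod_(l < n) F l (th l)) * aa th i.
Proof.
rewrite /aa /vv /uu fa_off [X in _ = X * _](bigD1 i) //=.
have := hF i (th i); rewrite lt0r => /andP [hne _].
by field.
Qed.

Lemma inner_bound pi' p' (hfe : feasible_expost pi' p') (th : profile t) i :
  \sum_(w < k) \sum_(j < m) pi' th i w j * X i (th i) w j <= p' th i * MtR (uu th i).
Proof.
case: hfe => h0 h1 _; rewrite /Mt mulr_sumr; apply: ler_sum => w _.
rewrite -(h1 th i w) mulr_suml; apply: ler_sum => j _.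
rewrite -xa_off; apply: ler_wpM2l => //; apply: Mw_ge => //.
Qed.

Lemma ours_inner (th : profile t) i :
  \sum_(w < k) \sum_(j < m) pio th i w j * X i (th i) w j = Wn th i * MtR (uu th i).
Proof.
rewrite /Mt mulr_sumr; apply: eq_bigr => w _.
set a := (uu th i * k + w)%N.
rewrite (eq_bigr (fun j : 'I_m => Wn th i / ccR a m * (evR a j * xa S m regs0 a j))); last first.
  by move=> j _; rewrite /pio -/a /a /uu xa_off; ring.
rewrite -mulr_sumr ev_sum //.
have hc : ccR a m != 0 by rewrite gt_eqF // cc_pos.
by rewrite /Mw; field.
Qed.

Lemma opt (rf' : rf_type R n m k t) : in_PF F rf' ->
  rf_objective rf' X <= rf_objective (reduced_form F pio) X.
Proof.
case=> pi' [p' [hfe ->]]; rewrite !obj_rf; apply: ler_sum => th _.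
have hfe' := hfe; case: hfe => h0 h1 h2.
apply: (@le_trans _ _ (\sum_i (\prod_(l < n | l != i) F l (th l)) * (p' th i * MtR (uu th i)))).
  by apply: ler_sum => i _; apply: ler_wpM2l; [apply: Fm_ge0 | apply: inner_bound].
under [X in _ <= X]eq_bigr do rewrite ours_inner.
have E1 (q : 'I_n -> R) : \sum_i (\prod_(l < n | l != i) F l (th l)) * (q i * MtR (uu th i)) =
    (\prod_(l < n) F l (th l)) * \sum_i q i * aa th i.
  rewrite mulr_sumr; apply: eq_bigr => i _.
  by rewrite mulrCA FmMt; ring.
rewrite (E1 (p' th)) (E1 (Wn th)); apply: ler_wpM2l.
  by apply: prodr_ge0 => l _; apply: ltW.
apply: win_opt; last exact: h2.
by move=> i; rewrite -(h1 th i (Ordinal hk)); apply: sumr_ge0 => j _.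
Qed.

Lemma n_le_S : (n <= S)%N.
Proof.
have : (\sum_(i < n) 1 <= S)%N by apply: leq_sum => i _; apply: ht.
by rewrite sum1_card card_ord.
Qed.

Lemma out_eq' u (w : 'I_k) (j : 'I_m) : (u < S)%N ->
  evR (u * k + w) j * rN S n m k bu (off t) regs0 u w =
  reduced_form F pio (tagged (nth x0 (tys t) u)) w j.
Proof.
move=> hu; set x := nth x0 (tys t) u.
have hu' : u = (off t (tag x) + tagged x)%N.
  have ex : x = Tagged (fun i => 'I_(t i)) (tagged x) by case: (x).
  have : index x (tys t) = u by rewrite /x index_uniq ?uniq_tys ?size_tys.
  by rewrite {1}ex index_tys => e; exact: esym e.
by move: (out_eq (tag x) (tagged x) w j); rewrite -hu'.
Qed.

Lemma main_case : let T := tree S n m k bu (off t) in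
  (act_cost T (act_input F X) <= 24 * (m * k * S + S * S))%N /\
  exists rf, [/\ in_PF F rf, act_run T (act_input F X) = enc_rf rf &
    forall rf', in_PF F rf' -> rf_objective rf' X <= rf_objective rf X].
Proof.
move=> T.
have [hrun hcost] := tree_run n bu (off t) size_regs0 (erefl _).
split.
  apply: (leq_trans hcost); have := size_prog k bu (off t) hm n_le_S.
  have -> : (S * k * m = m * k * S)%N by rewrite (mulnC S k) (mulnC (k * S) m) mulnA.
  lia.
exists (reduced_form F pio); split.
- by exists pio, (fun th i => Wn th i); split => //; apply: feas_ours.
- rewrite /T -/regs0 hrun; apply: (@eq_from_nth _ 0).
    by rewrite size_map size_iota size_enc_rf.
  move=> p; rewrite size_map size_iota => hp.
  rewrite (nth_map 0%N) ?size_iota // nth_iota // add0n.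
  have km : (0 < k * m)%N by rewrite muln_gt0 hk hm.
  set a := (p %/ m)%N.
  have ha : (a < S * k)%N by rewrite ltn_divLR.
  have hw : (a %% k < k)%N by rewrite ltn_pmod.
  have hu : (a %/ k < S)%N by rewrite ltn_divLR.
  have hj : (p %% m < m)%N by rewrite ltn_pmod.
  have Ep : p = ((a %/ k * k + Ordinal hw) * m + Ordinal hj)%N by rewrite /= -divn_eq -divn_eq.
  rewrite Ep (nth_enc_rf x0) // -(out_eq' (a %/ k) (Ordinal hw) (Ordinal hj) hu).
  have := VO bu hm (@hoff n t) size_regs0 (erefl _) (erefl _) hu hw hj.
  by rewrite /iO.
- exact: opt.
Qed.
End Main.

Lemma obj0 (R : realFieldType) n m k t (X : rf_type R n m k t) :
  (m = 0 \/ k = 0 \/ n = 0)%N -> forall rf, rf_objective rf X = 0.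
Proof.
move=> H rf; rewrite /rf_objective.
case: H => [e|[e|e]]; subst.
- by rewrite big1 // => i _; rewrite big1 // => th _; rewrite big1 // => w _; rewrite big_ord0.
- by rewrite big1 // => i _; rewrite big1 // => th _; rewrite big_ord0.
- by rewrite big_ord0.
Qed.

Lemma trivial_case (R : realFieldType) n m k t (F : forall i : 'I_n, 'I_(t i) -> R)
  (X : rf_type R n m k t) (C : nat) :
  (m = 0 \/ k = 0 \/ n = 0)%N ->
  let S := (\sum_(i < n) t i)%N in
  (act_cost (Leaf [::]) (act_input F X) <= C * (m * k * S + S * S))%N /\
  exists rf : rf_type R n m k t,
    [/\ in_PF F rf, act_run (Leaf [::]) (act_input F X) = enc_rf rf
      & forall rf', in_PF F rf' -> rf_objective rf' X <= rf_objective rf X].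
Proof.
move=> H S; split => //.
exists (reduced_form F (fun _ _ _ _ => 0)); split.
- exists (fun _ _ _ _ => 0), (fun _ _ => 0); split => //; split => //.
  + by move=> th i w; rewrite big1.
  + by move=> th; rewrite big1.
- apply/esym/size0nil; rewrite size_enc_rf /Sx.
  by case: H => [e|[e|e]]; subst; rewrite ?muln0 ?mul0n ?big_ord0.
- by move=> rf' _; rewrite !obj0.
Qed.

Theorem mainTheorem11 (R : realType) :
  exists C : nat,
  forall (n m k : nat) (t : 'I_n -> nat),
  exists T : act_tree,
  forall (F : forall i : 'I_n, 'I_(t i) -> R) (X : rf_type R n m k t),
    (forall i th, 0 < F i th) ->
    (forall i, \sum_(th < t i) F i th = 1) ->
    let S := (\sum_(i < n) t i)%N in
    (act_cost T (act_input F X) <= C * (m * k * S + S * S))%N /\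
    exists rf : rf_type R n m k t,
      [/\ in_PF F rf,
          act_run T (act_input F X) = enc_rf rf
        & forall rf', in_PF F rf' -> rf_objective rf' X <= rf_objective rf X].
Proof.
exists 24%N => n m k t.
case: (boolP [forall l : 'I_n, (0 < t l)%N]) => hall; last first.
  exists (Leaf [::]) => F X hF hs; exfalso.
  move: hall; rewrite negb_forall => /existsP [l hl].
  have := hs l; rewrite big1 => [/eqP|th]; first by rewrite eq_sym oner_eq0.
  by have := ltn_ord th; move: hl; lia.
case: (posnP m) => [m0|hm].
  by exists (Leaf [::]) => F X _ _; apply: trivial_case; left.
case: (posnP k) => [k0|hk].
  by exists (Leaf [::]) => F X _ _; apply: trivial_case; right; left.
case: (posnP n) => [n0|hn].
  by exists (Leaf [::]) => F X _ _; apply: trivial_case; right; right.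
have ht : forall l, (0 < t l)%N by move=> l; apply: (forallP hall l).
exists (tree (Sx t) n m k (bu n t ht hn) (off t)) => F X hF hs.
exact: (@main_case _ _ _ _ _ ht hm hk hn _ _ hF hs).
Qed.
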